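(* Let $G=(V,E)$ be a simple undirected graph with $m=|E|$, $b:V\to\mathbb{Z}_{\ge0}$ with $\beta=\max_v b(v)$, and $f:2^E\to\mathbb{R}_{\ge0}$ a normalized monotone submodular function satisfying the local dependence assumption. Then the Lazy Greedy algorithm for submodular $b$-matching runs in $O(\beta\, m\log m)$ time.
   Context: A $b$-matching is $M\subseteq E$ with $|M\cap\delta(v)|\le b(v)$ for all $v$ ($\delta(v)$ = edges incident to $v$); $v$ is saturated if equality holds; an edge is available w.r.t. $M$ if it is not in $M$ and both its endpoints are unsaturated. Marginal gain: $\rho_e(A)=f(A\cup\{e\})-f(A)$. Local dependence assumption: the marginal gain $\rho_e(A)$ of an edge $e$ depends only on the edges of $A$ adjacent to $e$ (sharing an endpoint with $e$). Lazy Greedy algorithm: start with $M=\emptyset$ and a max-heap containing all edges, each keyed by $f(\{e\})$. While the heap is nonempty: pop the top edge $e$ and recompute its marginal gain $\rho_e(M)$; if $e$ is available, then if $\rho_e(M)$ is at least the key of the current heap top (or the heap is empty) add $e$ to $M$, otherwise push $e$ back with key $\rho_e(M)$; unavailable popped edges are discarded. Running time counts each marginal gain evaluation and availability check as constant time. *)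

(* Defs.v *)
From mathcomp Require Import all_boot all_order all_algebra.
Set Implicit Arguments. Unset Strict Implicit. Unset Printing Implicit Defensive.
Import Order.TTheory GRing.Theory Num.Theory.
Local Open Scope ring_scope.

Section LazyGreedy.
Variables (T : finType) (R : realFieldType).
Variables (E : {set {set T}}) (b : T -> nat) (f : {set {set T}} -> R).

Definition simple_graph : Prop := forall e, e \in E -> #|e| = 2%N.

Definition delta (v : T) : {set {set T}} := [set e in E | v \in e].

Definition saturated (M : {set {set T}}) (v : T) : bool :=
  #|M :&: delta v| == b v.

Definition available (M : {set {set T}}) (e : {set T}) : bool :=
  (e \notin M) && [forall v in e, ~~ saturated M v].

Definition rho (e : {set T}) (A : {set {set T}}) : R := f (e |: A) - f A.

Definition adjacent_edges (e : {set T}) : {set {set T}} :=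
  [set e' in E | e' :&: e != set0].

Definition normalized : Prop := f set0 = 0.
Definition nonnegative : Prop := forall A : {set {set T}}, A \subset E -> 0 <= f A.
Definition monotone : Prop :=
  forall A B : {set {set T}}, A \subset B -> B \subset E -> f A <= f B.
Definition submodular : Prop :=
  forall A B : {set {set T}}, A \subset E -> B \subset E -> f (A :|: B) + f (A :&: B) <= f A + f B.
Definition local_dependence : Prop :=
  forall (e : {set T}) (A B : {set {set T}}), e \in E -> A \subset E -> B \subset E ->
    A :&: adjacent_edges e = B :&: adjacent_edges e -> rho e A = rho e B.

(* State of Lazy Greedy: current matching M and the heap, modelled as a
   multiset (sequence) of (edge, key) pairs.  Popping returns some entry
   of maximum key (ties resolved arbitrarily: the step is a relation). *)
Definition state := ({set {set T}} * seq ({set T} * R))%type.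

Definition init_state : state := (set0, [seq (e, f [set e]) | e <- enum E]).

Definition step (s s' : state) : Prop :=
  let (M, H) := s in
  exists e k, [/\ (e, k) \in H, (forall p, p \in H -> p.2 <= k) &
    let H' := rem (e, k) H in
    let g := rho e M in
    s' = if available M e then
           (if all (fun p => p.2 <= g) H' (* heap empty or g >= key of top *)
            then (e |: M, H') else (M, (e, g) :: H'))
         else (M, H')].

(* Cost of one iteration started with heap H: one pop and at most one push
   (each O(log |H|) on a binary heap, |H| being the heap size), plus a
   constant number of marginal-gain evaluations / availability checks /
   top-of-heap inspections (each counted as constant time). *)
Definition iter_cost (s : state) : nat := 3 + 2 * trunc_log 2 (size s.2).

Fixpoint run (s : state) (ss : seq state) : Prop :=
  match ss with
  | [::] => True
  | s' :: ss' => step s s' /\ run s' ss'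
  end.

Fixpoint run_cost (s : state) (ss : seq state) : nat :=
  match ss with
  | [::] => 0%N
  | s' :: ss' => (iter_cost s + run_cost s' ss')%N
  end.

End LazyGreedy.

(* Main.v *)
Require Import Defs.
From mathcomp Require Import all_boot all_order all_algebra.
From mathcomp Require Import zify.
Import Order.TTheory GRing.Theory Num.Theory.
Set Implicit Arguments. Unset Strict Implicit. Unset Printing Implicit Defensive.

Section Pf.
Variables (T : finType) (R : realFieldType) (E : {set {set T}}) (b : T -> nat)
  (f : {set {set T}} -> R).
Hypothesis simple : simple_graph E.
Hypothesis loc : local_dependence E f.
Variable beta : nat.
Hypothesis hb : forall v, (b v <= beta)%N.

Definition cnt (e : {set T}) (M : {set {set T}}) := #|M :&: adjacent_edges E e|.
Definition phi (M : {set {set T}}) (p : {set T} * R) : nat :=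
  (1 + (p.2 != rho f p.1 M) + (2 * beta - cnt p.1 M))%N.
Definition Phi (s : state T R) := (\sum_(p <- s.2) phi s.1 p)%N.
Definition Inv (s : state T R) :=
  [/\ s.1 \subset E, forall v, (#|s.1 :&: delta E v| <= b v)%N
    & forall p, p \in s.2 -> p.1 \in E].

Lemma cnt_le (M : {set {set T}}) (e : {set T}) : M \subset E -> (forall v, (#|M :&: delta E v| <= b v)%N) ->
  e \in E -> (cnt e M <= 2 * beta)%N.
Proof.
move=> ME Mb eE; have /eqP/cards2P [u [v [_ ev]]] := simple eE.
apply: (@leq_trans #|(M :&: delta E u) :|: (M :&: delta E v)|).
  apply: subset_leq_card; apply/subsetP => x.
  rewrite !inE => /andP[xM /andP[xE /set0Pn [w]]].
  rewrite ev !inE => /andP[wx /orP[] /eqP wuv]; subst w;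
    by rewrite xM xE wx ?orbT.
apply: (leq_trans (leq_card_setU _ _).1).
by rewrite mul2n -addnn leq_add // (leq_trans (Mb _)).
Qed.

Lemma phi_add (M : {set {set T}}) (e : {set T}) (p : {set T} * R) :
  M \subset E -> e \in E -> e \notin M ->
  (forall v, (#|(e |: M) :&: delta E v| <= b v)%N) ->
  p.1 \in E -> (phi (e |: M) p <= phi M p)%N.
Proof.
move=> ME eE eM Mb' pE.
have ME' : e |: M \subset E by rewrite subUset sub1set eE ME.
case: (boolP (e \in adjacent_edges E p.1)) => hadj.
  have hc : cnt p.1 (e |: M) = (cnt p.1 M).+1.
    rewrite /cnt.
    have -> : (e |: M) :&: adjacent_edges E p.1 = e |: (M :&: adjacent_edges E p.1).
      apply/setP => x; rewrite in_setI !in_setU1 in_setI.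
      by case: eqP => [->|] //=; rewrite hadj.
    by rewrite cardsU1 in_setI (negbTE eM).
  have := cnt_le ME' Mb' pE; rewrite /phi hc => hle.
  have := leq_b1 (p.2 != rho f p.1 (e |: M)).
  lia.
have heq : (e |: M) :&: adjacent_edges E p.1 = M :&: adjacent_edges E p.1.
  apply/setP => x; rewrite !in_setI in_setU1.
  by case: eqP => [->|] //=; rewrite (negbTE hadj) !andbF.
by rewrite /phi /cnt heq (loc pE ME' ME heq).
Qed.

Lemma step_dec (s s' : state T R) : Inv s -> step E b f s s' ->
  [/\ Inv s', (Phi s' < Phi s)%N & (size s'.2 <= size s.2)%N].
Proof.
case: s => M H; case: s' => M' H'.
move=> [/= ME Mb HE] [e [k [ekH kmax]]].
set H1 := rem (e, k) H.
have hsum : forall N, (\sum_(p <- H) phi N p = phi N (e, k) + \sum_(p <- H1) phi N p)%N.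
  by move=> N; rewrite (perm_big _ (perm_to_rem ekH)) big_cons.
have eE : e \in E := HE _ ekH.
have H1E : forall p, p \in H1 -> p.1 \in E := fun p hp => HE p (mem_rem hp).
have sz : size H1 = (size H).-1 by rewrite size_rem.
have Hpos : (0 < size H)%N by case: (H) ekH.
have phipos : forall N p, (0 < phi N p)%N by [].
case: ifP => avail.
  case: ifP => allg [-> ->].
    move/andP: avail => [eM /forallP av].
    have Mb' : forall v, (#|(e |: M) :&: delta E v| <= b v)%N.
      move=> v; rewrite setIUl; apply: (leq_trans (leq_card_setU _ _).1).
      case: (boolP (v \in e)) => ve.
        have := av v; rewrite ve /= /saturated => ns.
        have lt : (#|M :&: delta E v| < b v)%N by rewrite ltn_neqAle ns Mb.
        have : (#|[set e] :&: delta E v| <= 1)%N.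
          by rewrite -(cards1 e); apply: subset_leq_card; apply: subsetIl.
        move=> h1; apply: (leq_trans (leq_add h1 (leqnn _))); by rewrite add1n.
      have -> : [set e] :&: delta E v = set0.
        apply/setP => x; rewrite !inE; case: eqP => // ->.
        by rewrite (negbTE ve) andbF.
      by rewrite cards0 add0n Mb.
    split => /=.
    - split => //=; by rewrite subUset sub1set eE ME.
    - rewrite /Phi /= hsum.
      apply: (@leq_ltn_trans (\sum_(p <- H1) phi M p)).
        rewrite !big_seq; apply: leq_sum => p hp.
        exact: phi_add ME eE eM Mb' (H1E p hp).
      by rewrite -{1}(add0n (\sum_(p <- H1) phi M p)) ltn_add2r.
    - by rewrite sz leq_pred.
  split => /=.
  - split => // p; rewrite inE => /orP[/eqP -> //|]; exact: H1E.
  - rewrite /Phi /= hsum big_cons ltn_add2r /phi /= eqxx /=.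
    move/negbT/allPn: allg => [p pH1]; rewrite -ltNge => lt.
    have kg : (rho f e M < k)%R := lt_le_trans lt (kmax p (mem_rem pH1)).
    by rewrite (gt_eqF kg).
  - by rewrite sz prednK.
move=> [-> ->]; split => /=.
- by split.
- rewrite /Phi /= hsum; by rewrite -[X in (X < _)%N]add0n ltn_add2r.
- by rewrite sz leq_pred.
Qed.

Lemma run_bound N (ss : seq (state T R)) : forall s, Inv s -> (size s.2 <= N)%N ->
  run E b f s ss ->
  (size ss <= Phi s)%N /\ (run_cost s ss <= size ss * (3 + 2 * trunc_log 2 N))%N.
Proof.
elim: ss => [|s' ss IH] s Is sz /=; first by [].
move=> [st rn]; have [Is' ltP szs'] := step_dec Is st.
have [h1 h2] := IH s' Is' (leq_trans szs' sz) rn.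
split; first exact: leq_ltn_trans h1 ltP.
rewrite mulSn; apply: leq_add => //.
rewrite /iter_cost leq_add2l leq_mul2l leq_trunc_log ?orbT //.
Qed.

End Pf.

Theorem lemma1 : exists C : nat,
  forall (T : finType) (R : realFieldType) (E : {set {set T}})
         (b : T -> nat) (f : {set {set T}} -> R),
  simple_graph E ->
  normalized f -> nonnegative E f -> monotone E f -> submodular E f ->
  local_dependence E f ->
  let m := #|E| in
  let beta := \max_(v : T) b v in
  (1 <= beta)%N -> (2 <= m)%N ->
  forall ss : seq (state T R),
    run E b f (init_state E f) ss ->
    (run_cost (init_state E f) ss <= C * beta * m * trunc_log 2 m)%N.
Proof.
exists 20 => T R E b f simple _ _ _ _ loc m beta hb1 hm ss hrun.
have hb : forall v, (b v <= beta)%N by move=> v; exact: (leq_bigmax (F := b) v).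
have Is : Inv E b (init_state E f).
  split => /=; first exact: sub0set.
    by move=> v; rewrite set0I cards0.
  move=> p /mapP [e]; rewrite mem_enum => eE -> //.
have szi : (size (init_state E f).2 <= m)%N by rewrite /= size_map -cardE.
have [h1 h2] := run_bound simple loc hb Is szi hrun.
have hPhi : (Phi E f beta (init_state E f) <= m * (2 + 2 * beta))%N.
  rewrite /Phi /= big_map big_enum /= /m -sum_nat_const.
  apply: leq_sum => e _; rewrite /phi.
  have := leq_b1 (f [set e] != rho f e set0); lia.
have hL : (1 <= trunc_log 2 m)%N by rewrite -(trunc_lognn (p := 2)) // leq_trunc_log.
have hn : (size ss <= m * (2 + 2 * beta))%N := leq_trans h1 hPhi.
apply: (leq_trans h2); apply: (leq_trans (leq_mul hn (leqnn _))).
move: (trunc_log 2 m) hL => L hL.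
clear -hb1 hm hL; move: beta hb1 m hm hL => B hB M hM hL.
nia.
Qed.
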